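(* Let $\mathcal{P}$ be a finite set of propositional variables, let $S \subset (2^{\mathcal{P}})^\ast \times \{0,1\}$ be a finite sample in which no trace carries both labels, let $\Omega$ assign a positive real weight to each trace of $S$ with $\sum_{(u,b)\in S}\Omega(u)=1$, and let $\kappa\in[0,1]$. Consider the procedure (Algorithm 1) that, for $n=1,2,3,\dots$ in increasing order, computes an $\mathrm{LTL}_f$ formula $\varphi_n$ of size $n$ that minimizes the weighted loss $wl(S,\varphi,\Omega)$ among all $\mathrm{LTL}_f$ formulas $\varphi$ of size $n$, and returns the first $\varphi_n$ with $wl(S,\varphi_n,\Omega)\le\kappa$. Then this procedure terminates, and the returned formula $\varphi$ satisfies $wl(S,\varphi,\Omega)\le\kappa$ and is of minimal size among all $\mathrm{LTL}_f$ formulas $\psi$ with $wl(S,\psi,\Omega)\le\kappa$.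
   Context: A trace over $\mathcal{P}$ is a finite sequence $u=a_0a_1\dots a_m$ with $a_i\in 2^{\mathcal{P}}$. $\mathrm{LTL}_f$ formulas are built from propositions $p\in\mathcal{P}$ with the operators $\neg,\lor,\land,\rightarrow$, $\mathbf{X}$ (next), $\mathbf{U}$ (until), $\mathbf{F}$ (eventually, $\mathbf{F}\varphi=\mathit{true}\,\mathbf{U}\,\varphi$) and $\mathbf{G}$ (globally, $\mathbf{G}\varphi=\neg\mathbf{F}\neg\varphi$), interpreted over finite traces with the standard finite-trace semantics of De Giacomo and Vardi; $V(\varphi,u)\in\{0,1\}$ denotes whether trace $u$ satisfies $\varphi$ at position $0$. The size $|\varphi|$ of a formula is the number of its distinct subformulas. A sample is a finite set of pairs $(u,b)$ with $u$ a trace and $b\in\{0,1\}$ its label. The weighted loss is $wl(S,\varphi,\Omega)=\sum_{(u,b)\in S}\Omega(u)\,|V(\varphi,u)-b|$. *)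

(* Defs.v *)
From HB Require Import structures.
From mathcomp Require Import all_boot all_order all_algebra.
Set Implicit Arguments. Unset Strict Implicit. Unset Printing Implicit Defensive.
Import Order.TTheory GRing.Theory Num.Theory.

Inductive ltl (P : Type) : Type :=
  | Prop_ of P
  | Not of ltl P
  | Or of ltl P & ltl P
  | And of ltl P & ltl P
  | Impl of ltl P & ltl P
  | Next of ltl P
  | Until of ltl P & ltl P
  | Ev of ltl P
  | Glob of ltl P.

Section Eq.
Variable P : eqType.
Fixpoint ltl_eqb (f g : ltl P) : bool :=
  match f, g with
  | Prop_ p, Prop_ q => p == q
  | Not f1, Not g1 => ltl_eqb f1 g1
  | Or f1 f2, Or g1 g2 => ltl_eqb f1 g1 && ltl_eqb f2 g2
  | And f1 f2, And g1 g2 => ltl_eqb f1 g1 && ltl_eqb f2 g2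
  | Impl f1 f2, Impl g1 g2 => ltl_eqb f1 g1 && ltl_eqb f2 g2
  | Next f1, Next g1 => ltl_eqb f1 g1
  | Until f1 f2, Until g1 g2 => ltl_eqb f1 g1 && ltl_eqb f2 g2
  | Ev f1, Ev g1 => ltl_eqb f1 g1
  | Glob f1, Glob g1 => ltl_eqb f1 g1
  | _, _ => false
  end.

Lemma ltl_eqbP : Equality.axiom ltl_eqb.
Proof.
elim=> [p|f1 IH1|f1 IH1 f2 IH2|f1 IH1 f2 IH2|f1 IH1 f2 IH2|f1 IH1|f1 IH1 f2 IH2|f1 IH1|f1 IH1]
  [q|g1|g1 g2|g1 g2|g1 g2|g1|g1 g2|g1|g1] /=; try by constructor.
all: try (by apply: (iffP eqP) => [->|[]]).
all: try (by case: (IH1 g1) => [->|H]; constructor; [|case]).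
all: by case: (IH1 g1) => [->|H] /=; [case: (IH2 g2) => [->|H']|]; constructor; try case.
Qed.

HB.instance Definition _ := hasDecEq.Build (ltl P) ltl_eqbP.
End Eq.

Fixpoint subf (P : Type) (f : ltl P) : seq (ltl P) :=
  f :: match f with
       | Prop_ _ => [::]
       | Not g | Next g | Ev g | Glob g => subf g
       | Or g h | And g h | Impl g h | Until g h => subf g ++ subf h
       end.

Definition fsize (P : eqType) (f : ltl P) : nat := size (undup (subf f)).

Definition trace (P : finType) := seq {set P}.

(* Finite-trace semantics (De Giacomo & Vardi) at position i of u (i < size u). *)
Fixpoint holds (P : finType) (u : trace P) (f : ltl P) (i : nat) : bool :=
  match f with
  | Prop_ p => p \in nth set0 u i
  | Not g => ~~ holds u g i
  | Or g h => holds u g i || holds u h i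
  | And g h => holds u g i && holds u h i
  | Impl g h => holds u g i ==> holds u h i
  | Next g => (i.+1 < size u) && holds u g i.+1
  | Until g h =>
      has (fun j => holds u h j && all (fun k => holds u g k) (index_iota i j))
          (index_iota i (size u))
  | Ev g => has (fun j => holds u g j) (index_iota i (size u))
  | Glob g => all (fun j => holds u g j) (index_iota i (size u))
  end.

Definition V (P : finType) (f : ltl P) (u : trace P) : bool := holds u f 0.

Local Open Scope ring_scope.

Definition wl (R : numDomainType) (P : finType) (S : seq (trace P * bool))
    (f : ltl P) (Omega : trace P -> R) : R :=
  \sum_(ub <- S) Omega ub.1 * `|(V f ub.1)%:R - (ub.2)%:R|.

(* Main.v *)
Require Import Defs.
From mathcomp Require Import all_boot all_order all_algebra.
Import Order.TTheory GRing.Theory Num.Theory.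

Section Char.
Variable P : finType.
Variable p0 : P.
Definition Tt : ltl P := Impl (Prop_ p0) (Prop_ p0).
Definition lit (a : {set P}) (p : P) : ltl P :=
  if p \in a then Prop_ p else Not (Prop_ p).
Definition L (a : {set P}) : ltl P := foldr (fun p f => And (lit a p) f) Tt (enum P).
Fixpoint E (a : {set P}) (u : trace P) : ltl P :=
  match u with
  | [::] => And (L a) (Not (Next Tt))
  | b :: u' => And (L a) (Next (E b u'))
  end.

Lemma holdsT (v : trace P) i : holds v Tt i.
Proof. by rewrite /= implybb. Qed.

Lemma holdsL (v : trace P) a i : holds v (L a) i = (nth set0 v i == a).
Proof.
have H : forall s, holds v (foldr (fun p f => And (lit a p) f) Tt s) i
   = all (fun p => (p \in nth set0 v i) == (p \in a)) s.
  elim=> [|p s IH] /=; first by rewrite implybb.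
  rewrite IH /lit; case: (p \in a) => /=; first by rewrite eqb_id.
  by rewrite eqbF_neg.
rewrite /L H; apply/idP/eqP => [/allP Hall|->].
  by apply/setP => p; apply/eqP; apply: Hall; rewrite mem_enum.
by apply/allP => p _.
Qed.

Lemma holdsE (v : trace P) u : forall a i, (i < size v)%N ->
  holds v (E a u) i = (drop i v == a :: u).
Proof.
elim: u => [|b u IH] a i Hi.
  rewrite /= holdsL (drop_nth set0 Hi) eqseq_cons implybb andbT.

  congr (_ && _); rewrite -size_eq0 size_drop.
  by apply/idP/idP; rewrite ?subn_eq0; case: ltnP.
rewrite /= holdsL (drop_nth set0 Hi) eqseq_cons; congr (_ && _).
case: ltnP => Hs /=; first by rewrite IH.
by rewrite drop_oversize.
Qed.

Definition F (S : seq (trace P * bool)) : ltl P :=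
  foldr (@Or P) (Not Tt) [seq E (head set0 ub.1) (behead ub.1) | ub <- S & ub.2].

Lemma holdsF (S : seq (trace P * bool)) (v : trace P) :
  (0 < size v)%N -> (forall ub, ub \in S -> (0 < size ub.1)%N) ->
  holds v (F S) 0 = has (fun ub => ub.2 && (v == ub.1)) S.
Proof.
move=> Hv; rewrite /F; elim: S => [|ub S IH] HS /=; first by rewrite implybb.
have Hub : (0 < size ub.1)%N by apply: HS; rewrite inE eqxx.
rewrite -IH; last by move=> x Hx; apply: HS; rewrite inE Hx orbT.
case: ub.2 Hub => //= Hub; rewrite holdsE // drop0.
by case: ub.1 Hub.
Qed.
End Char.

Fixpoint leaf (P : Type) (f : ltl P) : P :=
  match f with
  | @Prop_ _ p => p
  | @Not _ g | @Next _ g | @Ev _ g | @Glob _ g => leaf _ g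
  | @Or _ g _ | @And _ g _ | @Impl _ g _ | @Until _ g _ => leaf _ g
  end.

Local Open Scope ring_scope.

Lemma fsize_pos (P : finType) (f : ltl P) : (1 <= fsize f)%N.
Proof.
have Hf : f \in undup (subf f) by rewrite mem_undup; case: f => * /=; rewrite inE eqxx.
by rewrite /fsize; case: (undup _) Hf.
Qed.

Theorem theorem1 (R : realFieldType) (P : finType)
    (S : seq (trace P * bool)) (Omega : trace P -> R) (kappa : R)
    (phi : nat -> ltl P) :
  uniq S ->
  (forall ub, ub \in S -> (0 < size ub.1)%N) ->
  (forall u, (u, true) \in S -> (u, false) \notin S) ->
  (forall ub, ub \in S -> 0 < Omega ub.1) ->
  \sum_(ub <- S) Omega ub.1 = 1 ->
  0 <= kappa <= 1 ->
  (forall n, (1 <= n)%N ->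
     fsize (phi n) = n /\
     (forall psi : ltl P, fsize psi = n -> wl S (phi n) Omega <= wl S psi Omega)) ->
  exists N : nat,
    [/\ (1 <= N)%N,
        (forall m, (1 <= m < N)%N -> kappa < wl S (phi m) Omega),
        wl S (phi N) Omega <= kappa &
        forall psi : ltl P, wl S psi Omega <= kappa -> (fsize (phi N) <= fsize psi)%N].
Proof.
move=> _ Hsz Hlab _ _ /andP[Hk0 _] Hphi.
set psi0 := F P (leaf _ (phi 1%N)) S.
have Hw0 : wl S psi0 Omega = 0.
  rewrite /wl big1_seq // => [[v b]] /= Hin.
  suff -> : V psi0 v = b by rewrite subrr normr0 mulr0.
  rewrite /V /psi0 holdsF //; last by apply: (Hsz (v, b)).
  case: b Hin => Hin.
    by apply/hasP; exists (v, true) => //=; rewrite eqxx.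
  apply/negbTE/hasP => -[[w c] Hw /= /andP[Hc /eqP Hvw]].
  by subst; case: c Hw Hc => // Hw _; move: (Hlab w Hw); rewrite Hin.
have Hex : exists n, (1 <= n)%N && (wl S (phi n) Omega <= kappa).
  exists (fsize psi0); rewrite fsize_pos /=.
  have [_ H] := Hphi _ (fsize_pos _ psi0).
  by apply: le_trans (H psi0 erefl) _; rewrite Hw0.
case: (ex_minnP Hex) => N /andP[HN1 HNk] Hmin.
exists N; split => //.
- move=> m /andP[Hm1 HmN]; rewrite ltNge; apply/negP => Hle.
  by have := Hmin m; rewrite Hm1 Hle => /(_ isT); rewrite leqNgt HmN.
- move=> psi Hpsi; rewrite (Hphi N HN1).1.
  have Hp1 := fsize_pos _ psi.
  apply: Hmin; rewrite Hp1 /=.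
  have [_ H] := Hphi _ Hp1.
  exact: le_trans (H psi erefl) Hpsi.
Qed.
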